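(* Let $X_1,\dots,X_n$ be finitely many topological spaces and $f\colon X_1\times\dots\times X_n\to Y$ a separately continuous map into a topological space $Y$. If $\mathcal C$ is an epireflective subcategory of $\mathbf{Top}$, then there is a (necessarily unique) separately continuous map $\overline f\colon\mathrm{r}_{\mathcal C}X_1\times\dots\times\mathrm{r}_{\mathcal C}X_n\to\mathrm{r}_{\mathcal C}Y$ such that $\overline f(\mathrm{r}_{(X_1,\mathcal C)}(x_1),\dots,\mathrm{r}_{(X_n,\mathcal C)}(x_n))=\mathrm{r}_{(Y,\mathcal C)}(f(x_1,\dots,x_n))$ for all $x_i\in X_i$.
   Context: An epireflective subcategory $\mathcal C$ of $\mathbf{Top}$ is a full, isomorphism-closed subcategory closed under products and subspaces; each space $X$ has a reflection $\mathrm{r}_{\mathcal C}X\in\mathcal C$ with a continuous surjection $\mathrm{r}_{(X,\mathcal C)}\colon X\to\mathrm{r}_{\mathcal C}X$ through which every continuous map from $X$ into a space of $\mathcal C$ factors uniquely. A map on a product is separately continuous if it is continuous in each variable when all other variables are fixed. *)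

(* Defs.v *)
From HB Require Import structures.
From mathcomp Require Import all_boot all_order all_algebra.
From mathcomp Require Import all_classical all_reals all_analysis.

Set Implicit Arguments.
Unset Strict Implicit.
Unset Printing Implicit Defensive.

Local Open Scope classical_set_scope.

Definition homeomorphic (S T : topologicalType) : Prop :=
  exists (f : S -> T) (g : T -> S),
    [/\ continuous f, continuous g, cancel f g & cancel g f].

(** An epireflective subcategory of Top, given by its class of objects:
    (full by convention) isomorphism-closed, closed under (arbitrary)
    products and under subspaces. *)
Record epireflective (C : topologicalType -> Prop) : Prop := {
  epi_iso : forall S T : topologicalType, homeomorphic S T -> C S -> C T;
  epi_prod : forall (I : Type) (T : I -> topologicalType),
      (forall i, C (T i)) -> C (prod_topology T : topologicalType);
  epi_sub : forall (T : topologicalType) (A : set T),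
      C T -> C (set_type A : topologicalType)
}.

Definition is_reflection (C : topologicalType -> Prop)
    (X RX : topologicalType) (q : X -> RX) : Prop :=
  [/\ C RX, continuous q, (forall y : RX, exists x : X, q x = y) &
      forall (Z : topologicalType), C Z -> forall g : X -> Z, continuous g ->
        exists! h : RX -> Z, continuous h /\ h \o q = g].

Definition separately_continuous {I : eqType} (T : I -> topologicalType)
    (Y : topologicalType) (f : (forall i, T i) -> Y) : Prop :=
  forall (a : forall i, T i) (i : I),
    continuous (fun x : T i => f (@dfwith I T a i x)).

Arguments is_reflection : clear implicits.
Arguments separately_continuous {I} T Y f.

(* Main.v *)
Require Import Defs.
From HB Require Import structures.
From mathcomp Require Import all_boot all_order all_algebra.
From mathcomp Require Import all_classical all_reals all_analysis.

Lemma dfwith_map (I : eqType) (A B : I -> Type) (g : forall j, A j -> B j)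
  (p : forall j, A j) i (s : A i) j :
  g j (dfwith p i s j) = dfwith (fun j => g j (p j)) i (g i s) j.
Proof. rewrite /dfwith; case: (i =P j) => [e|//]; by case: j / e. Qed.

Theorem corollary3p8 (C : topologicalType -> Prop) (hC : epireflective C)
    (n : nat) (X : 'I_n -> topologicalType) (Y : topologicalType)
    (RX : 'I_n -> topologicalType) (qX : forall i, X i -> RX i)
    (hX : forall i, is_reflection C (X i) (RX i) (qX i))
    (RY : topologicalType) (qY : Y -> RY) (hY : is_reflection C Y RY qY)
    (f : (forall i, X i) -> Y) (hf : separately_continuous X Y f) :
  exists! fbar : (forall i, RX i) -> RY,
    separately_continuous RX RY fbar /\
    forall x : forall i, X i, fbar (fun i => qX i (x i)) = qY (f x).
Proof.
have surj i : forall y : RX i, exists x : X i, qX i x = y by case: (hX i).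
have [CRY qYc _ _] := hY.
pose pre (r : forall i, RX i) : forall i, X i := fun i => sval (cid (surj i (r i))).
have preK r i : qX i (pre r i) = r i := svalP (cid (surj i (r i))).
have step a j s t : qX j s = qX j t ->
    qY (f (dfwith a j s)) = qY (f (dfwith a j t)).
  move=> e.
  case: (hX j) => _ _ _ /(_ RY CRY (fun s => qY (f (dfwith a j s)))) [|h [[_ hq] _]].
    by move=> x; apply: continuous_comp; [exact: hf | exact: qYc].
  have Hs := congr1 (fun F => F s) hq; have Ht := congr1 (fun F => F t) hq.
  simpl in Hs, Ht; by rewrite -Hs -Ht e.
have diff a b j : (forall i, i != j -> a i = b i) -> qX j (a j) = qX j (b j) ->
    qY (f a) = qY (f b).
  move=> H e.
  have -> : a = dfwith a j (a j).
    apply: functional_extensionality_dep => i.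
    by case: dfwithP.
  have -> : b = dfwith a j (b j).
    apply: functional_extensionality_dep => i.
    by case: dfwithP => // i' ne; rewrite H // eq_sym.
  exact: step.
have wd x x' : (forall i, qX i (x i) = qX i (x' i)) -> qY (f x) = qY (f x').
  move=> H.
  pose z k : forall i, X i := fun i => if (i < k)%N then x' i else x i.
  have Zk k : qY (f x) = qY (f (z k)).
    elim: k => [|k IH].
      by congr (qY (f _)).
    rewrite IH; case: (ltnP k n) => kn.
      apply: (diff _ _ (Ordinal kn)).
        move=> i ne; rewrite /z ltnS (leq_eqVlt i k).
        have -> : (nat_of_ord i == k) = false.
          by apply/negbTE; apply: contra ne => /eqP ik; apply/eqP/val_inj.
        by [].
      by rewrite /z /= ltnn leqnn.
    congr (qY (f _)); apply: functional_extensionality_dep => i.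
    have i1 : (i < k)%N by apply: leq_trans (ltn_ord i) kn.
    by rewrite /z i1 (ltn_trans i1 (ltnSn k)).
  have -> : x' = z n.
    by apply: functional_extensionality_dep => i; rewrite /z ltn_ord.
  exact: Zk.
pose fbar (r : forall i, RX i) := qY (f (pre r)).
have fq x : fbar (fun i => qX i (x i)) = qY (f x).
  by apply: wd => i; rewrite preK.
exists fbar; split; first split; last first.
- move=> g [_ Hg]; apply: funext => r; rewrite /fbar -Hg.
  congr g; apply: functional_extensionality_dep => i; by rewrite preK.
- exact: fq.
move=> a i.
case: (hX i) => _ _ _ /(_ RY CRY (fun s => qY (f (dfwith (pre a) i s)))) [|h [[hc hq] _]].
  by move=> x; apply: continuous_comp; [exact: hf | exact: qYc].
have E : (fun t => fbar (dfwith a i t)) = h.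
  apply: funext => t; have [s <-] := surj i t.
  have := congr1 (fun F => F s) hq => /= ->.
  rewrite -fq; congr fbar; apply: functional_extensionality_dep => j.
  have pa : (fun j => qX j (pre a j)) = a.
    by apply: functional_extensionality_dep => k; rewrite preK.
  have E2 := @dfwith_map _ (fun j => X j) (fun j => RX j) qX (pre a) i s j.
  apply: (etrans _ (esym E2)).
  exact: (congr1 (fun F => dfwith F i (qX i s) j) (esym pa)).
rewrite E. exact hc.
Qed.
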